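(* Let $\mathbf{L}=U^{\oplus3}\oplus[-2]^{\oplus2}$. If $G\subset\mathrm{O}(\mathbf{L})$ is a group with $|G|=2$ whose image $G^{\sharp}$ in $\mathrm{O}(\mathbf{L}^{\sharp})$ is trivial, then $\mathbf{L}_G$ and $\mathbf{L}^G$ are $2$-elementary lattices.
   Context: $U$ is the hyperbolic plane, $[n]$ the rank one lattice generated by a vector of square $n$. $\mathbf{L}^{\sharp}=\mathbf{L}^*/\mathbf{L}$ is the discriminant group and $G^{\sharp}$ is the image of $G$ under the natural map $\mathrm{O}(\mathbf{L})\to\mathrm{O}(\mathbf{L}^{\sharp})$. A lattice is $2$-elementary if its discriminant group is isomorphic to $(\mathbb{Z}/2\mathbb{Z})^{\oplus a}$ for some $a\ge0$. $\mathbf{L}^G$ is the invariant sublattice and $\mathbf{L}_G=(\mathbf{L}^G)^{\perp}$ the coinvariant sublattice. *)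

(* Defs.v *)
From HB Require Import structures.
From mathcomp Require Import all_boot all_order all_algebra.
Set Implicit Arguments. Unset Strict Implicit. Unset Printing Implicit Defensive.
Import Order.TTheory GRing.Theory Num.Theory.
Local Open Scope ring_scope.

(* Lattices are modelled inside Z^n (column vectors of integers); the
   rational extension L (x) Q is 'cV[rat]_n.  A bilinear form is given by
   its (symmetric) Gram matrix B. *)

(* Gram matrix of L = U^{+3} (+) [-2]^{+2}: coordinates 0..5 form three
   hyperbolic planes {0,1},{2,3},{4,5}; coordinates 6,7 have square -2. *)
Definition gramL : 'M[int]_8 :=
  \matrix_(i < 8, j < 8)
    if (i < 6)%N then (if (i./2 == j./2)%N && (i != j :> nat) then 1 else 0)
    else if (i == j :> nat) then -2 else 0.

Definition bform n (B : 'M[int]_n) (x y : 'cV[int]_n) : int :=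
  (x^T *m B *m y) 0 0.

Definition bformQ n (B : 'M[int]_n) (x y : 'cV[rat]_n) : rat :=
  (x^T *m map_mx intr B *m y) 0 0.

Definition toQ n (v : 'cV[int]_n) : 'cV[rat]_n := map_mx intr v.

Definition isZ (q : rat) : Prop := exists z : int, q = z%:~R.

(* O(L): integral isometries (invertibility over Z follows since det B <> 0) *)
Definition is_isometryL n (B : 'M[int]_n) (g : 'M[int]_n) : Prop :=
  g^T *m B *m g = B.

Definition in_dualL n (B : 'M[int]_n) (x : 'cV[rat]_n) : Prop :=
  forall m : 'cV[int]_n, isZ (bformQ B x (toQ m)).

(* G^# trivial: every element of G acts trivially on L^*/L, i.e.
   g x - x in L for all x in L^*. *)
Definition acts_trivially_on_discr n (B : 'M[int]_n) (g : 'M[int]_n) : Prop :=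
  forall x : 'cV[rat]_n, in_dualL B x ->
    exists v : 'cV[int]_n, map_mx intr g *m x - x = toQ v.

(* A sublattice is a subgroup M of Z^n, given as a predicate. *)
Definition in_span n (M : 'cV[int]_n -> Prop) (x : 'cV[rat]_n) : Prop :=
  exists c : int, c != 0 /\ exists m, M m /\ c%:~R *: x = toQ m.

Definition in_dual n (B : 'M[int]_n) (M : 'cV[int]_n -> Prop)
    (x : 'cV[rat]_n) : Prop :=
  in_span M x /\ forall m, M m -> isZ (bformQ B x (toQ m)).

Definition nondegenerate n (B : 'M[int]_n) (M : 'cV[int]_n -> Prop) : Prop :=
  forall m, M m -> (forall m', M m' -> bform B m m' = 0) -> m = 0.

(* M is 2-elementary: M is a nondegenerate lattice whose (finite)
   discriminant group M^*/M is an elementary abelian 2-group, i.e.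
   isomorphic to (Z/2Z)^a; equivalently 2 * M^* is contained in M. *)
Definition two_elementary n (B : 'M[int]_n) (M : 'cV[int]_n -> Prop) : Prop :=
  nondegenerate B M /\
  forall x, in_dual B M x -> exists m, M m /\ 2%:R *: x = toQ m.

(* invariant sublattice L^G for G = {1, g} *)
Definition invariant_lat n (g : 'M[int]_n) (v : 'cV[int]_n) : Prop :=
  g *m v = v.

Definition coinvariant_lat n (B : 'M[int]_n) (g : 'M[int]_n)
    (v : 'cV[int]_n) : Prop :=
  forall w, invariant_lat g w -> bform B v w = 0.

(* Main.v *)
Require Import Defs.
From mathcomp Require Import all_boot all_order all_algebra ring.
Set Implicit Arguments. Unset Strict Implicit. Unset Printing Implicit Defensive.
Import Order.TTheory GRing.Theory Num.Theory.
Local Open Scope ring_scope.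

Definition e (i : 'I_8) : 'cV[rat]_8 := delta_mx i 0.
Definition eZ (i : 'I_8) : 'cV[int]_8 := delta_mx i 0.
Definition p (i : 'I_8) : 'I_8 :=
  inord (if (i < 6)%N then (if odd i then i.-1 else i.+1) else i).
Definition cc (i : 'I_8) : int := if (i < 6)%N then 1 else -2.
Notation bQ := (bformQ gramL).

Lemma gram_col (i j : 'I_8) : gramL j i = if j == p i then cc i else 0.
Proof.
rewrite !mxE /p /cc.
case: i => [[|[|[|[|[|[|[|[|//]]]]]]]] ?]; case: j => [[|[|[|[|[|[|[|[|//]]]]]]]] ?].
all: rewrite -val_eqE /= ?inordK //.
Qed.

Lemma pp (i : 'I_8) : p (p i) = i /\ cc (p i) = cc i.
Proof.
rewrite /p /cc; split; last by rewrite /= inordK; case: i => [[|[|[|[|[|[|[|[|//]]]]]]]] ?].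
apply: val_inj.
by case: i => [[|[|[|[|[|[|[|[|//]]]]]]]] ?]; rewrite /= !inordK.
Qed.

Lemma p6 (i : 'I_8) : (6 <= i)%N -> p i = i /\ cc i = -2.
Proof.
rewrite /p /cc; move=> H; have H' : (i < 6)%N = false by rewrite ltnNge H.
rewrite H' /=; split=> //.
by apply: val_inj; rewrite /= inordK.
Qed.

Lemma bQe (x : 'cV[rat]_8) (i : 'I_8) :
  bQ x (e i) = x (p i) 0 * (cc i)%:~R.
Proof.
rewrite /bformQ /e -colE mxE mxE.
under eq_bigr => j _ do rewrite mxE [X in _ * X]mxE gram_col.
rewrite (bigD1 (p i)) //= big1 ?addr0; first by rewrite eqxx.
by move=> j /negPf Hj; rewrite Hj mulr0.
Qed.

Lemma cc_neq0 (i : 'I_8) : (cc i)%:~R != 0 :> rat.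
Proof. by rewrite /cc; case: ifP. Qed.

Lemma coordE (x : 'cV[rat]_8) (j : 'I_8) : x j 0 * (cc j)%:~R = bQ x (e (p j)).
Proof. by case: (pp j) => H1 H2; rewrite bQe H1 H2. Qed.

Lemma F1Q (x : 'cV[rat]_8) : (forall i, bQ x (e i) = 0) -> x = 0.
Proof.
move=> H; apply/matrixP => j k; rewrite (ord1 k) mxE.
have := coordE x j; rewrite H => /eqP; rewrite mulf_eq0 (negPf (cc_neq0 j)) orbF.
by move/eqP.
Qed.

Lemma isZ_opp q : isZ q -> isZ (- q).
Proof. by case=> z ->; exists (- z); rewrite mulrNz. Qed.
Lemma isZ_add q r : isZ q -> isZ r -> isZ (q + r).
Proof. by case=> z -> [w ->]; exists (z + w); rewrite mulrzDr. Qed.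
Lemma isZ_int (z : int) : isZ z%:~R.
Proof. by exists z. Qed.

Lemma F2Q (x : 'cV[rat]_8) : (forall i, isZ (2 * bQ x (e i))) ->
  (forall i : 'I_8, (6 <= i)%N -> isZ (bQ x (e i))) ->
  forall j, isZ (2 * x j 0).
Proof.
move=> H1 H2 j; have := coordE x j.
case: (leqP 6 j) => Hj.
  case: (p6 Hj) => -> ->. move=> E.
  have -> : 2 * x j 0 = - bQ x (e j) by rewrite -E; ring.
  by apply: isZ_opp; apply: H2.
by rewrite /cc Hj /= mulr1 => ->; exact: H1.
Qed.

Lemma intvec (y : 'cV[rat]_8) : (forall j, isZ (y j 0)) ->
  exists m : 'cV[int]_8, toQ m = y.
Proof.
move=> H; exists (map_mx numq y); apply/matrixP => j k; rewrite (ord1 k) !mxE.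
by case: (H j) => z ->; rewrite -[z%:~R]/(z%:Q) numq_int.
Qed.

Lemma toQ_inj (u v : 'cV[int]_8) : toQ u = toQ v -> u = v.
Proof.
move/matrixP => H; apply/matrixP => i j; have := H i j; rewrite !mxE.
exact: intr_inj.
Qed.
Lemma gramT : gramL^T = gramL.
Proof.
apply/matrixP => i j; rewrite !mxE.
by case: i => [[|[|[|[|[|[|[|[|//]]]]]]]] ?]; case: j => [[|[|[|[|[|[|[|[|//]]]]]]]] ?].
Qed.
Notation GQ g := (map_mx (intr : int -> rat) g).

Lemma bQDl x y z : bQ (x + y) z = bQ x z + bQ y z.
Proof. by rewrite /bformQ linearD /= !mulmxDl mxE. Qed.
Lemma bQDr x y z : bQ x (y + z) = bQ x y + bQ x z.
Proof. by rewrite /bformQ !mulmxDr mxE. Qed.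
Lemma bQZl (a : rat) x z : bQ (a *: x) z = a * bQ x z.
Proof. by rewrite /bformQ linearZ /= -!scalemxAl mxE. Qed.
Lemma bQZr (a : rat) x z : bQ x (a *: z) = a * bQ x z.
Proof. by rewrite /bformQ -!scalemxAr mxE. Qed.
Lemma bQNl x z : bQ (- x) z = - bQ x z.
Proof. by rewrite -scaleN1r bQZl mulN1r. Qed.
Lemma bQNr x z : bQ x (- z) = - bQ x z.
Proof. by rewrite -scaleN1r bQZr mulN1r. Qed.
Lemma bQsym x y : bQ x y = bQ y x.
Proof.
rewrite /bformQ; have -> : forall A : 'M[rat]_1, A 0 0 = A^T 0 0 by move=> A; rewrite mxE.
by rewrite !trmx_mul trmxK map_trmx gramT mulmxA.
Qed.

From mathcomp Require Import lra.

Lemma toQM (g : 'M[int]_8) v : toQ (g *m v) = GQ g *m toQ v.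
Proof. by rewrite /toQ map_mxM. Qed.
Lemma toQD (u v : 'cV[int]_8) : toQ (u + v) = toQ u + toQ v.
Proof. by rewrite /toQ map_mxD. Qed.
Lemma toQB (u v : 'cV[int]_8) : toQ (u - v) = toQ u - toQ v.
Proof. by rewrite /toQ map_mxB. Qed.
Lemma toQ0 : toQ (0 : 'cV[int]_8) = 0.
Proof. by apply/matrixP => i j; rewrite !mxE. Qed.
Lemma toQe i : toQ (eZ i) = e i.
Proof. by rewrite /toQ /eZ map_delta_mx. Qed.
Lemma bform_toQ u v : (bform gramL u v)%:~R = bQ (toQ u) (toQ v) :> rat.
Proof. by rewrite /bformQ /toQ /bform map_trmx -!map_mxM [RHS]mxE. Qed.

Lemma self_opp (x : rat) : x = - x -> x = 0.
Proof. move=> H; lra. Qed.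

Lemma triv_v (g : 'M[int]_8) :
  g *m g = 1%:M -> acts_trivially_on_discr gramL g ->
  forall i : 'I_8, (6 <= i)%N -> exists v : 'cV[int]_8,
    GQ g *m e i = e i + 2 *: toQ v /\ GQ g *m toQ v = - toQ v.
Proof.
move=> gg triv i H.
have hd : in_dualL gramL (2^-1 *: e i).
  move=> m; rewrite bQZl bQsym bQe; case: (p6 H) => -> ->.
  exists (- m i 0); rewrite /toQ mxE intrN. 
  have -> : ((-2)%:~R : rat) = -2 by [].
  by field.
case: (triv _ hd) => v Hv.
have E1 : GQ g *m e i = e i + 2 *: toQ v.
  by rewrite -Hv scalerBr scalemxAr !scalerA divff // !scale1r addrC subrK.
have GG : GQ g *m GQ g = 1%:M by rewrite -map_mxM gg map_mx1.
exists v; split => //.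
have H2 : GQ g *m (GQ g *m e i) = e i by rewrite mulmxA GG mul1mx.
move: H2; rewrite E1 mulmxDr E1 -scalemxAr => H2.
have H3 : 2 *: (GQ g *m toQ v) = - (2 *: toQ v).
  by apply: (addrI (e i + 2 *: toQ v)); rewrite H2 addrK.
by apply: (@scalerI _ _ 2) => //; rewrite H3 scalerN.
Qed.

Theorem lemma4p2 (g : 'M[int]_8) :
  is_isometryL gramL g ->
  g *m g = 1%:M ->
  g != 1%:M ->
  acts_trivially_on_discr gramL g ->
  two_elementary gramL (coinvariant_lat gramL g) /\
  two_elementary gramL (invariant_lat g).
Proof.
move=> iso gg _ triv.
have GG : GQ g *m GQ g = 1%:M by rewrite -map_mxM gg map_mx1.
have iso' : (GQ g)^T *m map_mx intr gramL *m GQ g = map_mx intr gramL.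
  by rewrite map_trmx -!map_mxM iso.
have bQG : forall x y, bQ (GQ g *m x) (GQ g *m y) = bQ x y.
  by move=> x y; rewrite /bformQ trmx_mul !mulmxA -(mulmxA x^T) -(mulmxA x^T) iso'.
have bQG1 : forall x y, bQ x (GQ g *m y) = bQ (GQ g *m x) y.
  by move=> x y; rewrite -bQG mulmxA GG mul1mx.
have invQ : forall v, invariant_lat g v <-> GQ g *m toQ v = toQ v.
  move=> v; split => [H|H]; first by rewrite -toQM H.
  by apply: toQ_inj; rewrite toQM.
have sumw : forall i, invariant_lat g (eZ i + g *m eZ i).
  by move=> i; rewrite /invariant_lat mulmxDr mulmxA gg mul1mx addrC.
have Gsw : forall i, GQ g *m (e i - GQ g *m e i) = - (e i - GQ g *m e i).
  by move=> i; rewrite mulmxBr mulmxA GG mul1mx opprB.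
have coinvQ : forall v, coinvariant_lat gramL g v <-> GQ g *m toQ v = - toQ v.
  move=> v; split.
  - move=> H; apply/eqP; rewrite -addr_eq0; apply/eqP; apply: F1Q => i.
    have := H _ (sumw i); move/(congr1 (fun z : int => z%:~R : rat)).
    rewrite bform_toQ mulr0z toQD toQM toQe bQDr bQG1 bQDl => E.
    lra.
  - move=> H w Hw; apply: (@intr_inj rat); rewrite bform_toQ.
    apply: self_opp.
    by rewrite -{1}bQG H (proj1 (invQ w) Hw) bQNl.
split.
- split.
  + move=> m Hm H; apply: toQ_inj; rewrite toQ0; apply: F1Q => i.
    have Hm' : coinvariant_lat gramL g (eZ i - g *m eZ i).
      by apply/coinvQ; rewrite toQB toQM toQe Gsw.
    have := H _ Hm'; move/(congr1 (fun z : int => z%:~R : rat)).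
    rewrite bform_toQ mulr0z toQB toQM toQe bQDr bQNr bQG1 (proj1 (coinvQ m) Hm) bQNl.
    move=> E; lra.
  + move=> x [[c [c0 [m [Hm Ex]]]] Hx].
    have Gx : GQ g *m x = - x.
      apply: (@scalerI _ _ (c%:~R : rat)); first by rewrite intr_eq0.
      by rewrite scalemxAr Ex (proj1 (coinvQ m) Hm) scalerN Ex.
    have h1 : forall i, isZ (2 * bQ x (e i)).
      move=> i.
      have Hm' : coinvariant_lat gramL g (eZ i - g *m eZ i).
        by apply/coinvQ; rewrite toQB toQM toQe Gsw.
      have := Hx _ Hm'.
      rewrite toQB toQM toQe bQDr bQNr bQG1 Gx bQNl.
      by have -> : bQ x (e i) - - bQ x (e i) = 2 * bQ x (e i) by ring.
    have h2 : forall i : 'I_8, (6 <= i)%N -> isZ (bQ x (e i)).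
      move=> i Hi; case: (triv_v gg triv Hi) => v [E1 E2].
      have Hv : coinvariant_lat gramL g v by apply/coinvQ.
      have := Hx _ Hv.
      have : bQ x (GQ g *m e i) = bQ x (e i) + 2 * bQ x (toQ v).
        by rewrite E1 bQDr bQZr.
      rewrite bQG1 Gx bQNl => E.
      have -> : bQ x (e i) = - bQ x (toQ v) by lra.
      exact: isZ_opp.
    have [m' Em'] : exists m' : 'cV[int]_8, toQ m' = 2 *: x.
      by apply: intvec => j; rewrite mxE; apply: F2Q.
    exists m'; split => //.
    by apply/coinvQ; rewrite Em' -scalemxAr Gx scalerN.
- split.
  + move=> m Hm H; apply: toQ_inj; rewrite toQ0; apply: F1Q => i.
    have := H _ (sumw i); move/(congr1 (fun z : int => z%:~R : rat)).
    rewrite bform_toQ mulr0z toQD toQM toQe bQDr bQG1 (proj1 (invQ m) Hm).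
    move=> E; lra.
  + move=> x [[c [c0 [m [Hm Ex]]]] Hx].
    have Gx : GQ g *m x = x.
      apply: (@scalerI _ _ (c%:~R : rat)); first by rewrite intr_eq0.
      by rewrite scalemxAr Ex (proj1 (invQ m) Hm).
    have h1 : forall i, isZ (2 * bQ x (e i)).
      move=> i; have := Hx _ (sumw i).
      rewrite toQD toQM toQe bQDr bQG1 Gx.
      by have -> : bQ x (e i) + bQ x (e i) = 2 * bQ x (e i) by ring.
    have h2 : forall i : 'I_8, (6 <= i)%N -> isZ (bQ x (e i)).
      move=> i Hi; case: (triv_v gg triv Hi) => v [E1 E2].
      have Hw : invariant_lat g (eZ i + v).
        by apply/invQ; rewrite toQD toQe mulmxDr E1 E2; rewrite -addrA; congr (_ + _); 
           rewrite scalerDl scale1r addrK.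
      have := Hx _ Hw.
      have : bQ x (GQ g *m e i) = bQ x (e i) + 2 * bQ x (toQ v).
        by rewrite E1 bQDr bQZr.
      rewrite bQG1 Gx toQD toQe bQDr => E.
      have -> : bQ x (toQ v) = 0 by lra.
      by rewrite addr0.
    have [m' Em'] : exists m' : 'cV[int]_8, toQ m' = 2 *: x.
      by apply: intvec => j; rewrite mxE; apply: F2Q.
    exists m'; split => //.
    by apply/invQ; rewrite Em' -scalemxAr Gx.
Qed.
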